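(* Let $S$ be a separable metric space with Borel $\sigma$-field $\mathcal{S}$, and let $\pi_{1},\pi_{2}:\Omega\to C(S)$ be two cr-sets. (a) If $\pi_1$ and $\pi_2$ are both constructive and \[P(\pi_{1}\cap F\neq \emptyset)=P(\pi_{2}\cap F\neq \emptyset)\quad\text{for all closed } F\subseteq S, \tag{$*$}\] then $P_{\pi_{1}}=P_{\pi_{2}}$. (b) If only $\pi_{2}$ is assumed constructive, then $( * )$ together with the condition ''for all $A\in\mathcal{S}$, $P(\pi_{2}\cap A\neq \emptyset)=0$ implies $P(\pi_{1}\cap A\neq \emptyset)=0$'' yields $P_{\pi_{1}}=P_{\pi_{2}}$. (c) If only $\pi_{2}$ is assumed constructive and $P(\pi_{1}\cap A\neq \emptyset)=P(\pi_{2}\cap A\neq \emptyset)$ for all $G_\delta$-sets $A\subseteq S$, then $P_{\pi_{1}}=P_{\pi_{2}}$.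
   Context: $(\Omega,\mathcal{F},P)$ is a probability space; $C(S)$ is the set of countable subsets of $S$; $N_A(M)=|A\cap M|$; $\mathcal{C}(\mathcal{S})=\sigma(N_A\mid A\in\mathcal{S})$; a cr-set is an $\mathcal{F}$-$\mathcal{C}(\mathcal{S})$ measurable map $\pi:\Omega\to C(S)$ with law $P_\pi$. A cr-set is finite if $|\pi(\omega)|<\infty$ for all $\omega$. A map $\tau:\Omega\to C(S)$ is constructive if there are finite cr-sets $\pi_k$, $k\in\mathbb{N}$, with $\tau(\omega)=\bigcup_k\pi_k(\omega)$ for all $\omega\in\Omega$. A $G_\delta$-set is a countable intersection of open sets. *)

(* Defs.v *)
From HB Require Import structures.
From mathcomp Require Import all_boot all_order all_algebra finmap.
From mathcomp Require Import all_classical all_reals all_analysis borel_hierarchy.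
Set Implicit Arguments. Unset Strict Implicit. Unset Printing Implicit Defensive.
Import Order.TTheory GRing.Theory Num.Theory.
Local Open Scope classical_set_scope.
Local Open Scope ring_scope.

Section space_defs.
Context {R : realType} (S : metricType R).

Definition separable_space : Prop :=
  exists D : set S, countable D /\ closure D = [set: S].

Definition borel_sets : set (set S) := <<s [set: S], open >>.

Definition CS : set (set S) := [set M | countable M].

(* cardinality in N u {oo} (None = oo) *)
Definition ncard (X : set S) : option nat :=
  if pselect (finite_set X) then Some #|` fset_set X|%fset else None.

Definition NA (A M : set S) : option nat := ncard (A `&` M).

(* generators of sigma(N_A | A Borel) on C(S): preimages N_A^{-1}(B) for all
   B subset of N u {oo} (discrete sigma-field on N u {oo}) *)
Definition CS_gen : set (set (set S)) :=
  [set E | exists (A : set S) (B : set (option nat)),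
     borel_sets A /\ E = CS `&` [set M | B (NA A M)]].

Definition CS_sigma : set (set (set S)) := <<s CS, CS_gen >>.

End space_defs.

Section crsets.
Context {d : measure_display} {Om : measurableType d} {R : realType}
  {S : metricType R}.

Definition crset (pi : Om -> set S) : Prop :=
  (forall w, countable (pi w)) /\
  (forall E, @CS_sigma _ S E -> measurable (pi @^-1` E)).

Definition finite_crset (pi : Om -> set S) : Prop :=
  crset pi /\ (forall w, finite_set (pi w)).

Definition constructive (tau : Om -> set S) : Prop :=
  exists pk : nat -> Om -> set S,
    (forall k, finite_crset (pk k)) /\ (forall w, tau w = \bigcup_k pk k w).

Definition hitP (P : probability Om R) (pi : Om -> set S) (A : set S) : \bar R :=
  P [set w | pi w `&` A !=set0].

Definition law_eq (P : probability Om R) (pi1 pi2 : Om -> set S) : Prop :=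
  forall E, @CS_sigma _ S E -> P (pi1 @^-1` E) = P (pi2 @^-1` E).

End crsets.

(* Main.v *)
Require Import Defs.
From HB Require Import structures.
From mathcomp Require Import all_boot all_order all_algebra finmap.
From mathcomp Require Import all_classical all_reals all_analysis borel_hierarchy.
From mathcomp Require Import zify ring lra.
Import Order.TTheory GRing.Theory Num.Theory.
Local Open Scope classical_set_scope.
Local Open Scope ring_scope.
Section combi.
Context {T : choiceType}.
Definition ge (k : nat) (X : set T) : Prop :=
  exists s : seq T, [/\ uniq s, size s = k & forall x, x \in s -> X x].

Lemma ge_fin k X : finite_set X -> ge k X <-> (k <= #|` fset_set X|)%N.
Proof.
move=> fX; split.
- case=> s [us <- sX].
  have -> : size s = #|` [fset x in s]%fset| by rewrite card_fseq undup_id.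
  apply: fsubset_leq_card; apply/fsubsetP => x; rewrite inE /= => xs.
  by rewrite in_fset_set // inE; exact: sX.
- move=> kn; exists (take k (fset_set X)); split.
  + by apply: take_uniq; exact: fset_uniq.
  + by rewrite size_takel.
  + by move=> x /mem_take; rewrite in_fset_set // inE.
Qed.

Lemma ge_inf k X : infinite_set X -> ge k X.
Proof.
move=> iX; have [B BX kB] := infinite_set_fset k iX.
exists (take k B); split.
- by apply: take_uniq; exact: fset_uniq.
- by rewrite size_takel.
- by move=> x /mem_take xB; apply: BX.
Qed.

Lemma ge_sub k X Y : X `<=` Y -> ge k X -> ge k Y.
Proof. by move=> XY [s [us ss sX]]; exists s; split => // x /sX /XY. Qed.

Lemma ge0 X : ge 0 X.
Proof. by exists [::]; split. Qed.

Lemma ge1 X : ge 1 X <-> X !=set0.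
Proof.
split.
- case=> [[|x [|y s]]] [//= _ _ sX]; exists x; apply: sX; exact: mem_head.
- by case=> x Xx; exists [:: x]; split => // y; rewrite inE => /eqP ->.
Qed.

End combi.

Section ncard_lemmas.
Context {R : realType} {S : metricType R}.

Lemma ncard_Some (X : set S) n : ncard X = Some n <-> ge n X /\ ~ ge n.+1 X.
Proof.
rewrite /ncard; case: pselect => fX.
- split.
  + case=> <-; split; first by apply/ge_fin.
    by rewrite ge_fin // ltnn.
  + move=> [/(ge_fin _ _ fX) h1 /(ge_fin _ _ fX)]; move=> h2; have {h2}h2 : (#|` fset_set X| <= n)%N by rewrite leqNgt; apply/negP.
    by congr Some; apply/eqP; rewrite eqn_leq h1 h2.
- split => //; move=> [_ h]; exfalso; apply: h; exact: ge_inf.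
Qed.

Lemma ncard_None (X : set S) : ncard X = None <-> forall k, ge k X.
Proof.
rewrite /ncard; case: pselect => fX.
- split => // /(_ (#|` fset_set X|).+1) /(ge_fin _ _ fX); by rewrite ltnn.
- by split => // _ k; exact: ge_inf.
Qed.

Lemma NA0 (A M : set S) : NA A M = Some 0%N <-> A `&` M = set0.
Proof.
rewrite /NA ncard_Some; split.
- move=> [_ h]; apply/eqP/negPn/negP => /set0P ne; apply: h; exact/ge1.
- move=> ->; split; first exact: ge0.
  by move/ge1 => [].
Qed.

End ncard_lemmas.
Section gsigma.
Context {T : Type} (D : set T) (G : set (set T)).
Local Notation Sg := <<s D, G >>.

Lemma gs0 : Sg set0.
Proof. exact: sigma_algebra0. Qed.

Lemma gsD0 : Sg D.
Proof. by have := (@sigma_algebraCD _ D G set0 gs0); rewrite setD0. Qed.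

Lemma gsC X : Sg X -> Sg (D `\` X).
Proof. exact: sigma_algebraCD. Qed.

Lemma gsU (F : (set T)^nat) : (forall n, Sg (F n)) -> Sg (\bigcup_n F n).
Proof. exact: sigma_algebra_bigcup. Qed.

Lemma gsU2 X Y : Sg X -> Sg Y -> Sg (X `|` Y).
Proof.
move=> hX hY; rewrite -(bigcup2E X Y); apply: (gsU (bigcup2 X Y)) => -[|[|n]] //=; exact: gs0.
Qed.

Lemma gsIn (F : (set T)^nat) : F 0%N `<=` D -> (forall n, Sg (F n)) ->
  Sg (\bigcap_n F n).
Proof.
move=> F0 hF.
have -> : \bigcap_n F n = D `\` \bigcup_n (D `\` F n).
  apply/seteqP; split => x.
  - move=> hx; split; first by apply: F0; exact: hx.
    by case=> n _ [_]; apply; exact: hx.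
  - move=> [Dx nx] n _; apply: contrapT => nFx; apply: nx; by exists n.
exact: (gsC _ (gsU _ (fun n => gsC _ (hF n)))).
Qed.

Lemma gsI2 X Y : X `<=` D -> Sg X -> Sg Y -> Sg (X `&` Y).
Proof.
move=> XD hX hY.
have -> : X `&` Y = \bigcap_n (fun n => if n is 0%N then X else Y) n.
  apply/seteqP; split => x.
  - by move=> [Xx Yx] [|n].
  - by move=> h; split; [exact: (h 0%N)|exact: (h 1%N)].
by apply: gsIn => // -[|n].

Qed.

Lemma gsDiff X Y : X `<=` D -> Sg X -> Sg Y -> Sg (X `\` Y).
Proof.
move=> XD hX hY.
have -> : X `\` Y = X `&` (D `\` Y).
  apply/seteqP; split => x.
  - by move=> [Xx nY]; split => //; split => //; exact: XD.
  - by move=> [Xx [_ nY]].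
by apply: gsI2 => //; exact: gsC.
Qed.

Lemma gs_sub : G `<=` [set X | X `<=` D] -> forall X, Sg X -> X `<=` D.
Proof.
move=> GD; apply: smallest_sub => //; split.
- exact: sub0set.
- by move=> A _; exact: subDsetl.
- by move=> F hF; apply: bigcup_sub => n _; exact: hF.
Qed.

End gsigma.

Section borel_lemmas.
Context {R : realType} {S : metricType R}.
Local Notation B := (@borel_sets R S).

Lemma B_open (A : set S) : open A -> B A.
Proof. by move=> oA; apply: sub_gen_smallest. Qed.

Lemma B_C (A : set S) : B A -> B (~` A).
Proof. by move=> hA; rewrite -setTD; exact: gsC. Qed.

Lemma B_closed (A : set S) : closed A -> B A.
Proof.
move=> cA; rewrite -(setCK A); apply: B_C; apply: B_open.
by rewrite openC.
Qed.

Lemma B_I (X Y : set S) : B X -> B Y -> B (X `&` Y).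
Proof. by move=> hX hY; apply: gsI2. Qed.

Lemma B_U (X Y : set S) : B X -> B Y -> B (X `|` Y).
Proof. exact: gsU2. Qed.

Lemma B_D (X Y : set S) : B X -> B Y -> B (X `\` Y).
Proof. by move=> hX hY; apply: gsDiff. Qed.

Lemma B_bigU (F : (set S)^nat) : (forall n, B (F n)) -> B (\bigcup_n F n).
Proof. exact: gsU. Qed.

Lemma B_bigI (F : (set S)^nat) : (forall n, B (F n)) -> B (\bigcap_n F n).
Proof. by move=> hF; apply: gsIn. Qed.

Lemma B_set0 : B set0.
Proof. exact: gs0. Qed.

End borel_lemmas.
Section renyi.
Context {R : realType} {S : metricType R}.
Local Notation CSS := (@CS _ S).
Variable U : nat -> nat -> set S.
Hypothesis hU : forall i j, (@borel_sets _ S) (U i j).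
Hypothesis hsep : forall x y : S, x <> y -> exists i j, U i j x /\ ~ U i j y.

Definition void (A : set S) : set (set S) := CSS `&` [set M | A `&` M = set0].
Definition Vsys : set (set (set S)) :=
  [set E | exists A, (@borel_sets _ S) A /\ E = void A].
Local Notation Sig := <<s CSS, Vsys >>.
Definition Ge k (A : set S) : set (set S) := CSS `&` [set M | ge k (A `&` M)].

Lemma Vsys_sub : Vsys `<=` [set X | X `<=` CSS].
Proof. by move=> _ [A [_ ->]]; exact: subIsetl. Qed.

Lemma Ge_sub k A : Ge k A `<=` CSS.
Proof. exact: subIsetl. Qed.

Lemma Ge_Sig k A : (@borel_sets _ S) A -> Sig (Ge k A).
Proof.
elim/ltn_ind: k A => -[|[|k]] IH A hA.
- rewrite (_ : Ge 0 A = CSS); first exact: gsD0.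
  apply/seteqP; split => M; first by case.
  by move=> h; split => //; exact: ge0.
- rewrite (_ : Ge 1 A = CSS `\` void A).
    by apply: gsC; apply: sub_gen_smallest; exists A.
  apply/seteqP; split => M.
  + move=> [CSM /ge1 ne]; split => // -[_ e]; move: ne; rewrite e.
    by case.
  + move=> [CSM nv]; split => //; apply/ge1/set0P/eqP => e; apply: nv.
    by split.
- have -> : Ge k.+2 A = \bigcup_i \bigcup_j \bigcup_p
      (if (p < k.+1)%N then Ge p.+1 (A `&` U i j) `&` Ge (k.+1 - p) (A `\` U i j)
       else set0).
    apply/seteqP; split => M.
    + move=> [CSM [s [us ss sAM]]].
      case: s us ss sAM => [|x [|y t]] //= us ss sAM.
      have xy : x <> y.
        move=> exy; move: us; rewrite exy /= inE eqxx /=; by [].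
      have [i [j [Ux nUy]]] := hsep _ _ xy.
      set s := [:: x, y & t].
      pose P := fun z => `[< U i j z >].
      have c1 : (0 < count P s)%N by rewrite /= /P (asboolT Ux).
      have c2 : (0 < count (predC P) s)%N.
        by rewrite /= /P (asboolT Ux) (asboolF nUy).
      have c3 := count_predC P s.
      have sz : size s = k.+2 by [].
      exists i => //; exists j => //; exists (count P s).-1 => //.
      rewrite ifT; last by rewrite prednK // -ltnS; move: c3 c2; rewrite sz; lia.
      split; split => //.
      * exists (seq.filter P s); split.
        -- exact: filter_uniq.
        -- by rewrite size_filter prednK.
        -- move=> z; rewrite mem_filter => /andP[Pz zs].
           have [Az Mz] := sAM z zs; split => //; split => //.
           exact: (asboolW Pz).
      * exists (seq.filter (predC P) s); split.
        -- exact: filter_uniq.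
        -- by rewrite size_filter; move: c3 c1; rewrite sz; case: (count P s) => // c /=; lia.
        -- move=> z; rewrite mem_filter => /andP[Pz zs].
           have [Az Mz] := sAM z zs; split => //; split => //.
           by move=> Uz; move: Pz; rewrite /= /P (asboolT Uz).
    + move=> [i _ [j _ [p _]]].
      case: ifP => // plt [[CSM [s1 [u1 z1 m1]]] [_ [s2 [u2 z2 m2]]]].
      split => //; exists (s1 ++ s2); split.
      * rewrite cat_uniq u1 u2 /= andbT; apply/hasPn => z zs2; apply/negP => zs1.
        have [[_ Uz] _] := m1 z zs1; have [[_ nUz] _] := m2 z zs2.
        exact: nUz.
      * by rewrite size_cat z1 z2; move: plt; lia.
      * move=> z; rewrite mem_cat => /orP[zs|zs].
        -- by have [[Az _] Mz] := m1 z zs.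
        -- by have [[Az _] Mz] := m2 z zs.
  apply: gsU => i; apply: gsU => j; apply: gsU => p.
  case: ifP => plt; last exact: gs0.
  apply: gsI2; first exact: Ge_sub.
  + by apply: IH => //; apply: B_I.
  + apply: IH; first by move: plt; lia.
    exact: B_D.
Qed.

Lemma gen_Sig E : (@CS_gen _ S) E -> Sig E.
Proof.
move=> [A [B [hA ->]]].
have -> : CSS `&` [set M | B (NA A M)] =
   \bigcup_n (if pselect (B (Some n)) is left _ then Ge n A `\` Ge n.+1 A else set0)
   `|` (if pselect (B None) is left _ then \bigcap_k Ge k A else set0).
  apply/seteqP; split => M.
  - move=> [CSM BM]; case E0: (NA A M) => [n|].
    + left; exists n => //; case: pselect => [_|]; last by rewrite -E0.
      move: E0 => /ncard_Some [g1 g2]; split; first by split.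
      by move=> [_].
    + right; case: pselect => [_|]; last by rewrite -E0.
      by move: E0 => /ncard_None h k _; split => //; exact: h.
  - case.
    + move=> [n _]; case: pselect => // Bn [[CSM g1] ng2]; split => //=.
      suff -> : NA A M = Some n by [].
      by apply/ncard_Some; split => // g; apply: ng2.
    + case: pselect => // BN h; split; first by have [] := h 0%N I.
      rewrite /=; suff -> : NA A M = None by [].
      by apply/ncard_None => k; have [] := h k I.
apply: gsU2.
- apply: gsU => n; case: pselect => _; last exact: gs0.
  apply: gsDiff; first exact: Ge_sub.
  + exact: Ge_Sig.
  + exact: Ge_Sig.
- case: pselect => _; last exact: gs0.
  apply: gsIn; first exact: Ge_sub.
  by move=> k; exact: Ge_Sig.
Qed.

Lemma CSsig_Sig E : (@CS_sigma _ S) E -> Sig E.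
Proof.
apply: smallest_sub; first exact: smallest_sigma_algebra.
exact: gen_Sig.
Qed.

Lemma void_CSsig A : (@borel_sets _ S) A -> (@CS_sigma _ S) (void A).
Proof.
move=> hA; apply: sub_gen_smallest; exists A, [set Some 0%N]; split => //.
apply/seteqP; split => M [CSM h]; split => //=.
- exact/NA0.
- exact/NA0.
Qed.

End renyi.
Section lawpart.
Context {d : measure_display} {Om : measurableType d} {R : realType}
  {S : metricType R} (P : probability Om R).
Local Notation CSS := (@CS _ S).
Local Notation CSsig := (@CS_sigma _ S).
Local Notation borel := (@borel_sets _ S).

Lemma CSsig_sub E : CSsig E -> E `<=` CSS.
Proof.
apply: gs_sub => _ [A [B [_ ->]]]; exact: subIsetl.
Qed.

Lemma hit_void (pi : Om -> set S) A : (forall w, countable (pi w)) ->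
  [set w | pi w `&` A !=set0] = pi @^-1` (CSS `\` void A).
Proof.
move=> c; apply/seteqP; split => w /=.
- move=> ne; split; first exact: c.
  move=> [_ e]; case: ne => x [px Ax].
  have : (A `&` pi w) x by [].
  by rewrite e.
- move=> [_ nv]; apply: contrapT => nne; apply: nv; split; first exact: c.
  apply/seteqP; split => // x [Ax px]; apply: nne; by exists x.
Qed.

Lemma hit_meas (pi : Om -> set S) A : crset pi -> borel A ->
  measurable [set w | pi w `&` A !=set0].
Proof.
move=> [c m] hA; rewrite hit_void //; apply: m; apply: gsC.
exact: void_CSsig.
Qed.

Lemma void_pre (pi : Om -> set S) A : (forall w, countable (pi w)) ->
  pi @^-1` void A = ~` [set w | pi w `&` A !=set0].
Proof.
move=> c; rewrite hit_void //; apply/seteqP; split => w /=.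
- by move=> vw [_]; apply.
- move=> h; split; first exact: c.
  apply: contrapT => nv; apply: h; split; first exact: c.
  by move=> [_ v]; exact: nv v.
Qed.

Lemma Pfin (A : set Om) : measurable A -> (P A < +oo)%E.
Proof. by move=> mA; apply: (le_lt_trans (probability_le1 P mA)); exact: ltry. Qed.

Variable U : nat -> nat -> set S.
Hypothesis hU : forall i j, borel (U i j).
Hypothesis hsep : forall x y : S, x <> y -> exists i j, U i j x /\ ~ U i j y.

Lemma law_from_hits pi1 pi2 : crset pi1 -> crset pi2 ->
  (forall A, borel A -> hitP P pi1 A = hitP P pi2 A) -> law_eq P pi1 pi2.
Proof.
move=> [c1 m1] [c2 m2] hh E hE.
pose H := [set E | CSsig E /\ P (pi1 @^-1` E) = P (pi2 @^-1` E)].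
suff : <<s CSS, Vsys >> `<=` H by move=> /(_ E (CSsig_Sig _ hU hsep _ hE)) [].
apply: lambda_system_subset.
- move=> _ _ [A [hA ->]] [B [hB ->]]; exists (A `|` B); split; first exact: B_U.
  apply/seteqP; split => M.
  + move=> [[CM eA] [_ eB]]; split => //=; rewrite setIUl eA eB; exact: setU0.
  + move=> [CM eAB]; split; split => //=; apply/seteqP; split => // x [Ax Mx].
    * have : ((A `|` B) `&` M) x by split => //; left.
      by rewrite eAB.
    * have : ((A `|` B) `&` M) x by split => //; right.
      by rewrite eAB.
- split.
  + by move=> A [hA _]; exact: CSsig_sub.
  + split; first exact: gsD0.
    have e1 : pi1 @^-1` CSS = setT by apply/seteqP; split => // w _; exact: c1.
    have e2 : pi2 @^-1` CSS = setT by apply/seteqP; split => // w _; exact: c2.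
    by rewrite e1 e2.
  + move=> A B BA [hA eA] [hB eB]; split.
      by apply: gsDiff => //; exact: CSsig_sub.
    have mA1 := m1 _ hA; have mB1 := m1 _ hB.
    have mA2 := m2 _ hA; have mB2 := m2 _ hB.
    have -> : pi1 @^-1` (A `\` B) = pi1 @^-1` A `\` pi1 @^-1` B by [].
    have -> : pi2 @^-1` (A `\` B) = pi2 @^-1` A `\` pi2 @^-1` B by [].
    rewrite measureD // ?measureD //; try exact: Pfin.
    rewrite (setIidr (@preimage_subset _ _ pi1 _ _ BA)) (setIidr (@preimage_subset _ _ pi2 _ _ BA)).
    by congr (_ - _)%E.
  + move=> F ndF hF; split.
      by apply: gsU => n; have [] := hF n.
    rewrite !preimage_bigcup.
    have L1 := @nondecreasing_cvg_mu _ _ _ P (fun n => pi1 @^-1` F n)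
      (fun n => m1 _ (proj1 (hF n))) (bigcupT_measurable _ (fun n => m1 _ (proj1 (hF n))))
      (fun n m nm => introT (subsetPset _ _) (@preimage_subset _ _ pi1 _ _ (elimT (subsetPset _ _) (ndF n m nm)))).
    have L2 := @nondecreasing_cvg_mu _ _ _ P (fun n => pi2 @^-1` F n)
      (fun n => m2 _ (proj1 (hF n))) (bigcupT_measurable _ (fun n => m2 _ (proj1 (hF n))))
      (fun n m nm => introT (subsetPset _ _) (@preimage_subset _ _ pi2 _ _ (elimT (subsetPset _ _) (ndF n m nm)))).
    have e : (P \o (fun n => pi1 @^-1` F n)) = (P \o (fun n => pi2 @^-1` F n)).
      by apply/funext => n /=; have [] := hF n.
    rewrite e in L1.
    exact: (cvg_unique (@ereal_hausdorff R) L1 L2).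
- move=> _ [A [hA ->]]; split; first exact: void_CSsig.
  rewrite !void_pre // !probability_setC; try exact: hit_meas.
  by have := hh A hA; rewrite /hitP => ->.
- by move=> X; apply: gs_sub; exact: Vsys_sub.
Qed.

End lawpart.
Section topo.
Context {R : realType} {S : metricType R}.

Lemma small_inv (e : R) : 0 < e -> exists N : nat, N.+1%:R^-1 < e.
Proof. by move=> e0; have [k] := ltr_add_invr e0; rewrite add0r; exists k. Qed.

Lemma inv_gt0 (N : nat) : 0 < N.+1%:R^-1 :> R.
Proof. by rewrite invr_gt0 ltr0n. Qed.

Lemma inv_le (N M : nat) : (N <= M)%N -> M.+1%:R^-1 <= N.+1%:R^-1 :> R.
Proof.
move=> NM; rewrite lef_pV2 ?posrE ?ltr0n // ler_nat; exact: leq_ltn_trans NM _.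
Qed.

Lemma ballM_open (x : S) (r : R) : open (ball x r).
Proof.
rewrite openE => y /=; rewrite ballEmdist /= => hxy.
apply/nbhs_ballP; exists (r - mdist x y); first by rewrite /= subr_gt0.
move=> z; rewrite /= !ballEmdist /= => hyz.
have := metric_triangle x y z; lra.
Qed.

Lemma ball_in (x y : S) (r : R) : ball x r y <-> mdist x y < r.
Proof. by rewrite ballEmdist. Qed.

Lemma mdist_symM (x y : S) : mdist x y = mdist y x.
Proof. exact: metric_sym. Qed.

Lemma sep_family : separable_space S ->
  exists U : nat -> nat -> set S, (forall i j, open (U i j)) /\
    (forall x y, x <> y -> exists i j, U i j x /\ ~ U i j y).
Proof.
move=> [D [cD clD]].
have [[x0 _]|nS] := pselect (exists x : S, True); last first.
  exists (fun _ _ => set0); split; first by move=> *; exact: open0.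
  by move=> x; exfalso; apply: nS; exists x.
have /countable_injP[f injf] := cD.
pose e n := 'pinv_(fun _ => x0) D f n.
exists (fun n m => ball (e n) (m.+1%:R^-1)); split.
  by move=> *; exact: ballM_open.
move=> x y xy.
have r0 : 0 < mdist x y by rewrite mdist_gt0; apply/eqP.
have [m hm] := small_inv (mdist x y / 3) (divr_gt0 r0 (ltr0Sn _ 2)).
set q := m.+1%:R^-1 in hm.
have q0 : 0 < q := inv_gt0 m.
have : closure D x by rewrite clD.
move=> /(_ _ (nbhsx_ballx x q q0)) [z [Dz bxz]].
exists (f z), m; rewrite /e pinvKV //; last by rewrite inE.
split.
- exact: ball_sym.
- rewrite ball_in => hzy.
  move: bxz; rewrite ball_in => hxz.
  have hzy' : mdist z y < q by [].
  have := metric_triangle x z y; clearbody q; lra.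
Qed.

Definition Capp (G : set S) (N : nat) : set S :=
  ~` \bigcup_(y in ~` G) ball y (N.+1%:R^-1).

Lemma Capp_closed G N : closed (Capp G N).
Proof.
rewrite /Capp closedC; apply: bigcup_open => y _; exact: ballM_open.
Qed.

Lemma Capp_sub G N : Capp G N `<=` G.
Proof.
move=> x hx; apply: contrapT => nG; apply: hx; exists x => //.
exact: (ball_center x (PosNum (inv_gt0 N))).
Qed.

Lemma Capp_mono G N M : (N <= M)%N -> Capp G N `<=` Capp G M.
Proof.
move=> NM x hx [y nGy bxy]; apply: hx; exists y => //.
move: bxy; rewrite !ball_in => h; exact: (lt_le_trans h (inv_le _ _ NM)).
Qed.

Lemma Capp_cover G : open G -> forall x, G x -> exists N, Capp G N x.
Proof.
move=> oG x Gx.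
have : nbhs x G by move: oG; rewrite openE => /(_ x Gx).
move=> /nbhs_ballP [e /= e0 be].
have [N hN] := small_inv _ e0; exists N.
move=> [y nGy byx]; apply: nGy; apply: be.
move: byx; rewrite !ball_in mdist_symM => h; exact: (lt_trans h hN).
Qed.

Lemma closed_Gdelta (F : set S) : closed F -> Gdelta F.
Proof.
move=> cF; exists (fun N => \bigcup_(y in F) ball y (N.+1%:R^-1)).
  by move=> N; apply: bigcup_open => y _; exact: ballM_open.
apply/seteqP; split.
- move=> x Fx N _; exists x => //.
  exact: (ball_center x (PosNum (inv_gt0 N))).
- move=> x hx; apply: cF => B /nbhs_ballP [e /= e0 be].
  have [N hN] := small_inv _ e0.
  have [y Fy byx] := hx N I.
  exists y; split => //; apply: be.
  move: byx; rewrite !ball_in mdist_symM => h; exact: (lt_trans h hN).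
Qed.

End topo.
Section ereal_helpers.
Context {R : realType}.
Local Open Scope ereal_scope.

Lemma cvg_lt_ex (u : nat -> \bar R) (r e : R) :
  u n @[n --> \oo] --> r%:E -> (0 < e)%R -> exists N, u N < (r + e)%:E.
Proof.
move=> L e0.
have h : (r < (fun x => x + e) r)%R by rewrite /= ltrDl.
have [N _ hN] := L _ (@nbhs_open_ereal_lt _ r (fun x => x + e)%R h).
by exists N; exact: (hN N (leqnn N)).
Qed.

Lemma cvg_gt_ex (u : nat -> \bar R) (r e : R) :
  u n @[n --> \oo] --> r%:E -> (0 < e)%R -> exists N, (r - e)%:E < u N.
Proof.
move=> L e0.
have h : ((fun x => x - e) r < r)%R by rewrite /= ltrBlDr ltrDl.
have [N _ hN] := L _ (@nbhs_open_ereal_gt _ r (fun x => x - e)%R h).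
by exists N; exact: (hN N (leqnn N)).
Qed.

End ereal_helpers.

Lemma fin_escape {T : choiceType} (X : set T) (D : nat -> set T) :
  finite_set X -> (forall n m, (n <= m)%N -> D m `<=` D n) ->
  (forall x, exists N, ~ D N x) -> exists N, X `&` D N = set0.
Proof.
move=> /finite_fsetP [B ->] Dd esc.
suff [N hN] : exists N, forall x, x \in (B : seq T) -> ~ D N x.
  exists N; apply/seteqP; split => // x [Bx DNx]; exact: (hN x Bx DNx).
elim: (B : seq T) => [|x s [N1 h1]]; first by exists 0%N.
have [N2 h2] := esc x.
exists (maxn N1 N2) => y; rewrite inE => /orP[/eqP ->|ys].
- by move=> /(Dd _ _ (leq_maxr N1 N2)).
- by move=> /(Dd _ _ (leq_maxl N1 N2)); exact: h1.
Qed.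

Section reg.
Context {d : measure_display} {Om : measurableType d} {R : realType}
  {S : metricType R} (P : probability Om R).
Local Notation borel := (@borel_sets _ S).
Local Open Scope ereal_scope.

Definition hit (tau : Om -> set S) (A : set S) : set Om :=
  [set w | tau w `&` A !=set0].

Lemma Ple (A B : set Om) : measurable A -> measurable B -> A `<=` B ->
  P A <= P B.
Proof. by move=> mA mB AB; apply: le_measure => //; rewrite inE. Qed.

Lemma hit_sub tau (A B : set S) : A `<=` B -> hit tau A `<=` hit tau B.
Proof. by move=> AB w [x [tx Ax]]; exists x; split => //; exact: AB. Qed.

Lemma hitU tau (A B : set S) : hit tau (A `|` B) = hit tau A `|` hit tau B.
Proof.
apply/seteqP; split => w.
- by move=> [x [tx [Ax|Bx]]]; [left|right]; exists x.
- by move=> [[x [tx Ax]]|[x [tx Bx]]]; exists x; split => //; [left|right].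
Qed.

Lemma hit_bigcup tau (F : nat -> set S) :
  hit tau (\bigcup_n F n) = \bigcup_n hit tau (F n).
Proof.
apply/seteqP; split => w.
- by move=> [x [tx [n _ Fx]]]; exists n => //; exists x.
- by move=> [n _ [x [tx Fx]]]; exists x; split => //; exists n.
Qed.

Lemma hit0 tau : hit tau set0 = set0.
Proof. by apply/seteqP; split => // w [x [_]]. Qed.

Variable tau : Om -> set S.
Hypothesis tfin : forall w, finite_set (tau w).
Hypothesis tmeas : forall A, borel A -> measurable (hit tau A).

Lemma fin_dec (D : nat -> set S) : (forall n, borel (D n)) ->
  (forall n m, (n <= m)%N -> D m `<=` D n) -> (forall x, exists N, ~ D N x) ->
  forall e : R, (0 < e)%R -> exists N, P (hit tau (D N)) < e%:E.
Proof.
move=> hD Dd esc e e0.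
have L := @nonincreasing_cvg_mu _ _ _ P (fun n => hit tau (D n))
  (Pfin P _ (tmeas _ (hD 0%N))) (fun n => tmeas _ (hD n))
  (bigcapT_measurable (fun n => tmeas _ (hD n)))
  (fun n m nm => introT (subsetPset _ _) (@hit_sub tau _ _ (Dd _ _ nm))).
have E0 : \bigcap_n hit tau (D n) = set0.
  apply/seteqP; split => // w hw.
  have [N hN] := @fin_escape _ _ D (tfin w) Dd esc.
  have [x [tx Dx]] := hw N I.
  have : (tau w `&` D N) x by [].
  by rewrite hN.
rewrite E0 measure0 in L.
have [N hN] := cvg_lt_ex _ _ _ L e0.
by exists N; move: hN; rewrite add0r.
Qed.

Definition Kp (A : set S) := forall e : R, (0 < e)%R -> exists F G,
  [/\ closed F, open G, F `<=` A, A `<=` G & P (hit tau (G `\` F)) < e%:E].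

Lemma Kp_open G : open G -> Kp G.
Proof.
move=> oG e e0.
have hD : forall N, borel (G `\` Capp G N).
  by move=> N; apply: B_D; [exact: B_open|exact: B_closed (Capp_closed G N)].
have Dd : forall n m, (n <= m)%N -> G `\` Capp G m `<=` G `\` Capp G n.
  by move=> n m nm x [Gx nC]; split => // c; apply: nC; exact: (@Capp_mono _ _ G n m nm).
have esc : forall x, exists N, ~ (G `\` Capp G N) x.
  move=> x; have [Gx|nGx] := pselect (G x).
  - by have [N hN] := Capp_cover _ oG _ Gx; exists N => -[_].
  - by exists 0%N => -[].
have [N hN] := fin_dec _ hD Dd esc _ e0.
exists (Capp G N), G; split => //.
- exact: Capp_closed.
- exact: Capp_sub.
Qed.

End reg.
Section reg2.
Context {d : measure_display} {Om : measurableType d} {R : realType}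
  {S : metricType R} (P : probability Om R).
Local Notation borel := (@borel_sets _ S).
Local Open Scope ereal_scope.

Lemma Pfinn (X : set Om) : measurable X -> P X \is a fin_num.
Proof. by move=> mX; rewrite ge0_fin_numE ?measure_ge0 //; exact: Pfin. Qed.

Variable tau : Om -> set S.
Hypothesis tfin : forall w, finite_set (tau w).
Hypothesis tmeas : forall A, borel A -> measurable (hit tau A).

Lemma Kp_borel X0 : borel X0 -> Kp P tau X0.
Proof.
move=> hA; suff sK : sigma_algebra setT (Kp P tau).
  exact: (smallest_sub sK (Kp_open P tau tfin tmeas) hA).
split.
- move=> e e0; exists set0, set0; split => //.
  + exact: closed0.
  + exact: open0.
  + by rewrite setD0 hit0 measure0 lte_fin.
- move=> X hX e e0; have [F [G [cF oG FX XG h]]] := hX e e0.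
  exists (~` G), (~` F); split.
  + by rewrite closedC.
  + by rewrite openC.
  + by move=> x nG; split => // Xx; apply: nG; exact: XG.
  + by move=> x [_ nX] Fx; apply: nX; exact: FX.
  + suff -> : ~` F `\` ~` G = G `\` F by [].
    apply/seteqP; split => x.
    * by move=> [nF nnG]; split; [exact: contrapT nnG|exact: nF].
    * by move=> [Gx nF]; split => // nG; exact: nG Gx.
- move=> A hAn e e0.
  have e2 : (0 < e / 2)%R by rewrite divr_gt0.
  have /choice[FG hFG] : forall n, exists p : set S * set S,
      [/\ closed p.1, open p.2, p.1 `<=` A n, A n `<=` p.2 &
          P (hit tau (p.2 `\` p.1)) < (e / 2 / (2 ^ n.+1)%:R)%:E].
    move=> n; have [|F [G h]] := hAn n (e / 2 / (2 ^ n.+1)%:R)%R.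
      by rewrite divr_gt0 // ltr0n expn_gt0.
    by exists (F, G).
  pose F n := (FG n).1; pose G n := (FG n).2.
  have cF n : closed (F n) by have [] := hFG n.
  have oG n : open (G n) by have [] := hFG n.
  have FA n : F n `<=` A n by have [] := hFG n.
  have AG n : A n `<=` G n by have [] := hFG n.
  have hn n : P (hit tau (G n `\` F n)) < (e / 2 / (2 ^ n.+1)%:R)%:E.
    by have [] := hFG n.
  pose FF N := \bigcup_(n in `I_N) F n.
  have cFF N : closed (FF N).
    rewrite /FF bigcup_mkord; apply: closed_bigsetU => i _; exact: cF.
  pose D N := (\bigcup_m F m) `\` FF N.
  have hD N : borel (D N).
    apply: B_D; last exact: B_closed.
    by apply: B_bigU => m; exact: B_closed.
  have Dd n m : (n <= m)%N -> D m `<=` D n.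
    move=> nm x [hx nFF]; split => // -[i iN Fi]; apply: nFF; exists i => //.
    exact: leq_trans iN nm.
  have esc x : exists N, ~ D N x.
    have [[m _ Fm]|nex] := pselect ((\bigcup_m F m) x).
    - by exists m.+1 => -[_]; apply; exists m => /=.
    - by exists 0%N => -[].
  have [N hN] := fin_dec P tau tfin tmeas _ hD Dd esc _ e2.
  exists (FF N), (\bigcup_n G n); split.
  + exact: cFF.
  + by apply: bigcup_open => n _; exact: oG.
  + by move=> x [i _ Fi]; exists i => //; exact: FA.
  + by move=> x [i _ Ai]; exists i => //; exact: AG.
  + have bG n : borel (G n `\` F n).
      by apply: B_D; [exact: B_open|exact: B_closed].
    have bU : borel (\bigcup_n (G n `\` F n)) by exact: B_bigU.
    have bL : borel ((\bigcup_n G n) `\` FF N).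
      apply: B_D; last exact: B_closed.
      by apply: B_bigU => n; exact: B_open.
    have sub : (\bigcup_n G n) `\` FF N `<=` D N `|` \bigcup_n (G n `\` F n).
      move=> x [[m _ Gm] nFF]; have [Fm|nFm] := pselect (F m x).
      * by left; split => //; exists m.
      * by right; exists m.
    apply: (le_lt_trans (Ple P _ _ (tmeas _ bL) _ (hit_sub tau _ _ sub))).
      by apply: tmeas; exact: B_U.
    rewrite hitU.
    apply: (le_lt_trans (measureU2 P (tmeas _ (hD N)) (tmeas _ bU))).
    rewrite (splitr e) EFinD.
    apply: lte_leD => //; first exact: Pfinn (tmeas _ bU).
    rewrite hit_bigcup.
    have SA : P (\bigcup_n hit tau (G n `\` F n)) <=
        \sum_(0 <= n <oo) P (hit tau (G n `\` F n)).
      apply: measure_sigma_subadditive => //.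
      - by move=> n; exact: tmeas.
      - by apply: bigcupT_measurable => n; exact: tmeas.
    apply: (le_trans SA).
    apply: (le_trans (@lee_nneseries _ _
              (fun n => 0 + (e / 2 / (2 ^ n.+1)%:R)%:E) xpredT 0%N _ _)).
    * by move=> *; exact: measure_ge0.
    * by move=> n _; rewrite add0e; exact: ltW.
    apply: (le_trans (epsilon_trick xpredT _ (ltW e2))) => //.
    by rewrite eseries0 // add0e.
Qed.

End reg2.
Lemma le0_inv {R : realType} (x : R) :
  (forall m : nat, x < m.+1%:R^-1) -> x <= 0.
Proof.
move=> h; rewrite leNgt; apply/negP => x0.
have [m hm] := small_inv _ x0; have := h m; rewrite ltNge => /negP; apply.
exact: ltW.
Qed.

Lemma le_eps {R : realType} (x y : R) : (forall e, 0 < e -> x < y + e) -> x <= y.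
Proof. by move=> h; apply/ler_addgt0Pr => e e0; apply/ltW; exact: h. Qed.

Section cons.
Context {d : measure_display} {Om : measurableType d} {R : realType}
  {S : metricType R} (P : probability Om R).
Local Notation borel := (@borel_sets _ S).

Definition pr (X : set Om) : R := fine (P X).

Lemma PE (X : set Om) : measurable X -> P X = (pr X)%:E.
Proof. by move=> mX; rewrite /pr fineK //; exact: Pfinn. Qed.

Lemma pr_ge0 (X : set Om) : 0 <= pr X.
Proof. by rewrite /pr fine_ge0 // measure_ge0. Qed.

Lemma pr_le (X Y : set Om) : measurable X -> measurable Y -> X `<=` Y ->
  pr X <= pr Y.
Proof.
move=> mX mY XY; rewrite -lee_fin -!PE //; exact: Ple.
Qed.

Lemma pr_U2 (X Y : set Om) : measurable X -> measurable Y ->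
  pr (X `|` Y) <= pr X + pr Y.
Proof.
move=> mX mY; rewrite -lee_fin EFinD -!PE //; last exact: measurableU.
exact: measureU2.
Qed.

Lemma pr_null (E : nat -> set Om) : (forall n, measurable (E n)) ->
  (forall n, pr (E n) = 0) -> pr (\bigcup_n E n) = 0.
Proof.
move=> mE hE; apply/eqP; rewrite eq_le pr_ge0 andbT.
rewrite -lee_fin -PE; last exact: bigcupT_measurable.
have SA : (P (\bigcup_n E n) <= \sum_(0 <= n <oo) P (E n))%E.
  apply: measure_sigma_subadditive => //; exact: bigcupT_measurable.
apply: (le_trans SA).
rewrite eseries0 // => n _ _; by rewrite PE // hE.
Qed.

Variable pi : Om -> set S.
Variable pk : nat -> Om -> set S.
Hypothesis hpk : forall k, finite_crset (pk k).
Hypothesis hpi : forall w, pi w = \bigcup_k pk k w.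
Hypothesis cpi : crset pi.

Definition tauk (n : nat) (w : Om) : set S := \bigcup_(k in `I_n.+1) pk k w.

Lemma tau_fin n w : finite_set (tauk n w).
Proof.
apply: bigcup_finite; first exact: finite_II.
by move=> k _; have [_] := hpk k; apply.
Qed.

Lemma hit_tau n A : hit (tauk n) A = \bigcup_(k in `I_n.+1) hit (pk k) A.
Proof.
apply/seteqP; split => w.
- by move=> [x [[k kn px] Ax]]; exists k => //; exists x.
- by move=> [k kn [x [px Ax]]]; exists x; split => //; exists k.
Qed.

Lemma tau_meas' n A : borel A -> measurable (hit (tauk n) A).
Proof.
move=> hA; rewrite hit_tau; apply: fin_bigcup_measurable; first exact: finite_II.
by move=> k _; have [ck _] := hpk k; exact: hit_meas.
Qed.

Lemma hit_pi A : hit pi A = \bigcup_n hit (tauk n) A.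
Proof.
apply/seteqP; split => w.
- move=> [x [pix Ax]]; move: pix; rewrite hpi => -[k _ px].
  by exists k => //; exists x; split => //; exists k => /=.
- move=> [n _ [x [[k _ px] Ax]]]; exists x; split => //.
  by rewrite hpi; exists k.
Qed.

Lemma tau_sub n A : hit (tauk n) A `<=` hit pi A.
Proof. by move=> w hw; rewrite hit_pi; exists n. Qed.

Lemma tau_mono A n m : (n <= m)%N -> hit (tauk n) A `<=` hit (tauk m) A.
Proof.
move=> nm w [x [[k kn px] Ax]]; exists x; split => //; exists k => //.
exact: leq_trans kn _.
Qed.

Lemma tau_lim A : borel A ->
  (P \o (fun n => hit (tauk n) A)) n @[n --> \oo] --> (pr (hit pi A))%:E.
Proof.
move=> hA; rewrite -PE; last exact: hit_meas.
rewrite hit_pi; apply: nondecreasing_cvg_mu.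
- by move=> n; exact: tau_meas'.
- by apply: bigcupT_measurable => n; exact: tau_meas'.
- by move=> n m nm; apply/subsetPset; exact: tau_mono.
Qed.

Lemma approx A : borel A -> exists F G : nat -> nat -> set S,
  forall n m, [/\ closed (F n m), open (G n m), F n m `<=` A, A `<=` G n m &
    pr (hit (tauk n) (G n m `\` F n m)) < m.+1%:R^-1].
Proof.
move=> hA.
have h : forall nm : nat * nat, exists p : set S * set S,
    [/\ closed p.1, open p.2, p.1 `<=` A, A `<=` p.2 &
     pr (hit (tauk nm.1) (p.2 `\` p.1)) < nm.2.+1%:R^-1].
  move=> [n m].
  have [F [G [cF oG FA AG hh]]] := Kp_borel P (tauk n) (tau_fin n)
    (tau_meas' n) _ hA _ (inv_gt0 m).
  exists (F, G); split => //=.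
  rewrite -lte_fin -PE //; apply: tau_meas'.
  by apply: B_D; [exact: B_open|exact: B_closed].
have [FG hFG] := choice h.
exists (fun n m => (FG (n, m)).1), (fun n m => (FG (n, m)).2) => n m.
exact: (hFG (n, m)).
Qed.

Lemma inner A : borel A -> forall e, 0 < e -> exists F, [/\ closed F, F `<=` A &
  pr (hit pi A) < pr (hit pi F) + e].
Proof.
move=> hA e e0.
have e2 : 0 < e / 2 by rewrite divr_gt0.
have [N hN] := cvg_gt_ex _ _ _ (tau_lim _ hA) e2.
have [F [G [cF oG FA AG hh]]] := Kp_borel P (tauk N) (tau_fin N)
  (tau_meas' N) _ hA _ e2.
exists F; split => //.
have bF : borel F by exact: B_closed.
have bGF : borel (G `\` F) by apply: B_D; [exact: B_open|exact: B_closed].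
rewrite /= PE in hN; last exact: tau_meas'.
rewrite PE in hh; last exact: tau_meas'.
rewrite lte_fin in hN; rewrite lte_fin in hh.
have h1 : pr (hit (tauk N) A) <= pr (hit (tauk N) F) + pr (hit (tauk N) (G `\` F)).
  apply: (le_trans _ (pr_U2 _ _ (tau_meas' N _ bF) (tau_meas' N _ bGF))).
  rewrite -hitU; apply: pr_le.
  - exact: tau_meas'.
  - by apply: tau_meas'; exact: B_U.
  - apply: hit_sub => x Ax; have [Fx|nFx] := pselect (F x); first by left.
    by right; split => //; exact: AG.
have h2 : pr (hit (tauk N) F) <= pr (hit pi F).
  apply: pr_le; [exact: tau_meas'|exact: hit_meas|exact: tau_sub].
lra.
Qed.

Definition Fk (F : nat -> nat -> set S) (k : nat) : set S :=
  if choice.unpickle k is Some (n, m) then F n m else set0.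
Definition Gk (G : nat -> nat -> set S) (k : nat) : set S :=
  if choice.unpickle k is Some (n, m) then G n m else setT.

Lemma null_inner A : borel A -> exists Fs : nat -> set S,
  (forall k, closed (Fs k)) /\ (forall k, Fs k `<=` A) /\
  pr (hit pi (A `\` \bigcup_k Fs k)) = 0.
Proof.
move=> hA; have [F [G hFG]] := approx _ hA.
exists (Fk F); split.
  by move=> k; rewrite /Fk; case: choice.unpickle => [[n m]|]; [have [] := hFG n m|exact: closed0].
split.
  by move=> k; rewrite /Fk; case: choice.unpickle => [[n m]|]; [have [] := hFG n m|].
have bB : borel (A `\` \bigcup_k Fk F k).
  apply: B_D => //; apply: B_bigU => k; apply: B_closed; rewrite /Fk.
  by case: choice.unpickle => [[n m]|]; [have [] := hFG n m|exact: closed0].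
rewrite hit_pi; apply: pr_null; first by move=> n; exact: tau_meas'.
move=> n; apply/eqP; rewrite eq_le pr_ge0 andbT; apply: le0_inv => m.
have [cF oG FA AG hh] := hFG n m.
apply: le_lt_trans hh; apply: pr_le.
- exact: tau_meas'.
- by apply: tau_meas'; apply: B_D; [exact: B_open|exact: B_closed].
- apply: hit_sub => x [Ax nB]; split; first exact: AG.
  move=> Fx; apply: nB; exists (choice.pickle (n, m)) => //.
  by rewrite /Fk choice.pickleK.
Qed.

Lemma null_outer A : borel A -> pr (hit pi A) = 0 ->
  exists H, [/\ Gdelta H, A `<=` H & pr (hit pi H) = 0].
Proof.
move=> hA h0; have [F [G hFG]] := approx _ hA.
have oGk k : open (Gk G k).
  by rewrite /Gk; case: choice.unpickle => [[n m]|]; [have [] := hFG n m|exact: openT].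
exists (\bigcap_k Gk G k); split.
- by exists (Gk G).
- move=> x Ax k _; rewrite /Gk; case: choice.unpickle => [[n m]|] //.
  by have [_ _ _ AG _] := hFG n m; exact: AG.
- have bH : borel (\bigcap_k Gk G k) by apply: B_bigI => k; exact: B_open.
  rewrite hit_pi; apply: pr_null; first by move=> n; exact: tau_meas'.
  move=> n; apply/eqP; rewrite eq_le pr_ge0 andbT; apply: le0_inv => m.
  have [cF oG FA AG hh] := hFG n m.
  have bGF : borel (G n m `\` F n m) by apply: B_D; [exact: B_open|exact: B_closed].
  have hA0 : pr (hit (tauk n) A) = 0.
    apply/eqP; rewrite eq_le pr_ge0 andbT -h0; apply: pr_le.
    + exact: tau_meas'.
    + exact: hit_meas.
    + exact: tau_sub.
  apply: le_lt_trans hh.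
  apply: (le_trans (y := pr (hit (tauk n) A) + pr (hit (tauk n) (G n m `\` F n m)))).
    apply: (le_trans _ (pr_U2 _ _ (tau_meas' n _ hA) (tau_meas' n _ bGF))).
    rewrite -hitU; apply: pr_le.
    + exact: tau_meas'.
    + by apply: tau_meas'; exact: B_U.
    + apply: hit_sub => x Hx; have [Ax|nAx] := pselect (A x); first by left.
      right; split.
      * have := Hx (choice.pickle (n, m)) I; by rewrite /Gk choice.pickleK.
      * by move=> /FA.
  by rewrite hA0 add0r.
Qed.

End cons.
Section final.
Context {d : measure_display} {Om : measurableType d} {R : realType}
  {S : metricType R} (P : probability Om R).
Local Notation borel := (@borel_sets _ S).

Lemma hitP_pr pi A : crset pi -> borel A -> hitP P pi A = (pr P (hit pi A))%:E.
Proof. by move=> c hA; apply: PE; exact: hit_meas. Qed.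

Lemma hits_eq pi1 pi2 (pk : nat -> Om -> set S) : crset pi1 -> crset pi2 ->
  (forall k, finite_crset (pk k)) -> (forall w, pi2 w = \bigcup_k pk k w) ->
  (forall F : set S, closed F -> hitP P pi1 F = hitP P pi2 F) ->
  (forall A : set S, borel A -> hitP P pi2 A = 0%E -> hitP P pi1 A = 0%E) ->
  forall A, borel A -> hitP P pi1 A = hitP P pi2 A.
Proof.
move=> c1 c2 hpk hpi hcl hac A hA.
have hclr F : closed F -> pr P (hit pi1 F) = pr P (hit pi2 F).
  by move=> cF; rewrite /pr; congr fine; exact: hcl.
have m1 B : borel B -> measurable (hit pi1 B) by move=> hB; exact: hit_meas.
have m2 B : borel B -> measurable (hit pi2 B) by move=> hB; exact: hit_meas.
rewrite (hitP_pr _ _ c1 hA) (hitP_pr _ _ c2 hA); congr EFin.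
apply/eqP; rewrite eq_le; apply/andP; split.
- have [Fs [cFs [FsA hnull]]] := null_inner P pi2 pk hpk hpi A hA.
  set B := \bigcup_k Fs k in hnull *.
  have bB : borel B by apply: B_bigU => k; exact: B_closed.
  have bAB : borel (A `\` B) by exact: B_D.
  have n1 : pr P (hit pi1 (A `\` B)) = 0.
    have := hac _ bAB; rewrite (hitP_pr _ _ c2 bAB) hnull => /(_ erefl).
    by rewrite /hitP /pr => ->.
  pose FF J := \bigcup_(k in `I_J) Fs k.
  have cFF J : closed (FF J).
    by apply: closed_bigcup; [exact: finite_II|move=> k _; exact: cFs].
  have eB : hit pi1 B = \bigcup_J hit pi1 (FF J).
    apply/seteqP; split => w.
    + move=> [x [px [k _ Fx]]]; exists k.+1 => //; exists x; split => //.
      by exists k => /=.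
    + by move=> [J _ [x [px [k _ Fx]]]]; exists x; split => //; exists k.
  have L : (P \o (fun J => hit pi1 (FF J))) n @[n --> \oo] -->
           (pr P (hit pi1 B))%:E.
    rewrite -PE; last exact: m1.
    rewrite eB; apply: nondecreasing_cvg_mu.
    + by move=> J; apply: m1; exact: B_closed.
    + by apply: bigcupT_measurable => J; apply: m1; exact: B_closed.
    + move=> n m nm; apply/subsetPset; apply: hit_sub => x [k kn Fx].
      by exists k => //; exact: leq_trans kn nm.
  apply: le_eps => e e0.
  have [J hJ] := cvg_gt_ex _ _ _ L e0.
  rewrite /= PE in hJ; last by apply: m1; exact: B_closed.
  rewrite lte_fin in hJ.
  have a1 : pr P (hit pi1 A) <= pr P (hit pi1 B) + pr P (hit pi1 (A `\` B)).
    apply: (le_trans _ (pr_U2 P _ _ (m1 _ bB) (m1 _ bAB))).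
    rewrite -hitU; apply: pr_le; [exact: m1|by apply: m1; exact: B_U|].
    apply: hit_sub => x Ax; have [Bx|nBx] := pselect (B x); first by left.
    by right.
  have a2 := hclr _ (cFF J).
  have a3 : pr P (hit pi2 (FF J)) <= pr P (hit pi2 A).
    apply: pr_le; [by apply: m2; exact: B_closed|exact: m2|].
    by apply: hit_sub => x [k _ Fx]; exact: FsA Fx.
  lra.
- apply: le_eps => e e0.
  have [F [cF FA hF]] := inner P pi2 pk hpk hpi c2 A hA e e0.
  have a2 := hclr _ cF.
  have a3 : pr P (hit pi1 F) <= pr P (hit pi1 A).
    apply: pr_le; [by apply: m1; exact: B_closed|exact: m1|].
    exact: hit_sub.
  lra.
Qed.

End final.

Theorem theorem1p6 (R : realType) (d : measure_display) (Om : measurableType d)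
  (P : probability Om R) (S : metricType R) (pi1 pi2 : Om -> set S) :
  separable_space S -> crset pi1 -> crset pi2 ->
  [/\ (constructive pi1 -> constructive pi2 ->
        (forall F : set S, closed F -> hitP P pi1 F = hitP P pi2 F) ->
        law_eq P pi1 pi2),
      (constructive pi2 ->
        (forall F : set S, closed F -> hitP P pi1 F = hitP P pi2 F) ->
        (forall A : set S, @borel_sets _ S A ->
           hitP P pi2 A = 0%E -> hitP P pi1 A = 0%E) ->
        law_eq P pi1 pi2)
    & (constructive pi2 ->
        (forall A : set S, Gdelta A -> hitP P pi1 A = hitP P pi2 A) ->
        law_eq P pi1 pi2)].
Proof.
move=> sep c1 c2.
have [U [oU hsep]] := sep_family sep.
have hU i j : @borel_sets _ S (U i j) by apply: B_open; exact: oU.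
split.
- move=> [pk1 [hpk1 hpi1]] [pk2 [hpk2 hpi2]] hcl.
  apply: (law_from_hits P U hU hsep _ _ c1 c2).
  apply: (hits_eq P _ _ _ c1 c2 hpk2 hpi2 hcl) => A hA h0.
  have h0r : pr P (hit pi2 A) = 0 by rewrite /pr; move: h0; rewrite /hitP => ->.
  rewrite (hitP_pr P _ _ c1 hA); congr EFin; apply/eqP; rewrite eq_le pr_ge0 andbT.
  apply: le_eps => e e0; rewrite add0r.
  have [F [cF FA hF]] := inner P pi1 pk1 hpk1 hpi1 c1 A hA e e0.
  have a2 : pr P (hit pi1 F) = pr P (hit pi2 F).
    by rewrite /pr; congr fine; exact: hcl.
  have a3 : pr P (hit pi2 F) <= pr P (hit pi2 A).
    apply: pr_le; [by apply: hit_meas => //; exact: B_closed|exact: hit_meas|].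
    exact: hit_sub.
  lra.
- move=> [pk2 [hpk2 hpi2]] hcl hac.
  apply: (law_from_hits P U hU hsep _ _ c1 c2).
  exact: (hits_eq P _ _ _ c1 c2 hpk2 hpi2 hcl hac).
- move=> [pk2 [hpk2 hpi2]] hG.
  have hcl F : closed F -> hitP P pi1 F = hitP P pi2 F.
    by move=> cF; apply: hG; exact: closed_Gdelta.
  apply: (law_from_hits P U hU hsep _ _ c1 c2).
  apply: (hits_eq P _ _ _ c1 c2 hpk2 hpi2 hcl) => A hA h0.
  have h0r : pr P (hit pi2 A) = 0 by rewrite /pr; move: h0; rewrite /hitP => ->.
  have [H [gH AH nH]] := null_outer P pi2 pk2 hpk2 hpi2 c2 A hA h0r.
  have bH : @borel_sets _ S H.
    by case: gH => Fs oFs ->; apply: B_bigI => n; apply: B_open; exact: oFs.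
  have e1 : hitP P pi1 H = 0%E by rewrite hG // (hitP_pr P _ _ c2 bH) nH.
  rewrite (hitP_pr P _ _ c1 hA); congr EFin; apply/eqP; rewrite eq_le pr_ge0 andbT.
  have : pr P (hit pi1 H) = 0 by rewrite /pr; move: e1; rewrite /hitP => ->.
  move=> <-; apply: pr_le; [exact: hit_meas|exact: hit_meas|exact: hit_sub].
Qed.
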